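(* Consider (1+1) GP-single applied to MO-ORDER, and (1+1) GP-single applied to MO-MAJORITY, each started with the empty tree as initial solution. In both cases the expected optimization time is $\Omega(n\log n)$.
   Context: Fix an integer $n\ge 1$ and real weights $w_1\ge w_2\ge\dots\ge w_n>0$. The terminal set is $T=\{x_1,\bar x_1,\dots,x_n,\bar x_n\}$ ($\bar x_i$ is the complement of $x_i$; $x_i$ is called positive). A syntax tree is either the empty tree or a rooted ordered binary tree whose inner nodes are all labelled by the binary function $J$ (join, exactly two ordered children) and whose leaves are labelled by elements of $T$. The complexity $C(X)$ is the number of nodes of $X$ (0 for the empty tree). The leaf list $l$ of $X$ is the sequence of leaf labels in an inorder traversal. WORDER: build a list $S$ by scanning $l$ from front to rear and appending a literal only if neither it nor its complement is already in $S$; WORDER$(X)=\sum_{i:\,x_i\in S} w_i$. WMAJORITY: WMAJORITY$(X)=\sum w_i$ over all $i$ such that $x_i$ occurs in $l$ at least once and at least as often as $\bar x_i$. ORDER and MAJORITY are WORDER and WMAJORITY with all $w_i=1$. For $F$ one of these, MO-$F(X)=(F(X),C(X))$ (MO-ORDER, MO-MAJORITY, MO-WORDER, MO-WMAJORITY), where $F$ is to be maximized and $C$ minimized. Mutation (HVL-Prime applied $k$ times): each application chooses uniformly at random one of three operations. Substitute: replace a uniformly random leaf by a uniformly random $u\in T$. Insert: choose a uniformly random node $v$ and uniformly random $u\in T$, replace $v$ by a $J$-node with children $u$ and $v$ in uniformly random order (inserting into the empty tree yields the single leaf $u$). Delete: choose a uniformly random leaf $v$ with parent $p$ and sibling $u$,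 replace $p$ by $u$ (deleting $p$ and $v$; deleting the only leaf of a one-leaf tree yields the empty tree). Single-operation mutation uses $k=1$. (1+1) GP-single on MO-$F$: start with an initial tree $X$; in each iteration let $Y$ be $X$ mutated with $k=1$, and set $X:=Y$ iff $F(Y)>F(X)$, or $F(Y)=F(X)$ and $C(Y)\le C(X)$. Expected optimization time: expected number of iterations (fitness evaluations) until the current solution is for the first time optimal, i.e. has maximum possible $F$-value and, among such trees, minimum complexity. *)

(* Defs.v *)
From Stdlib Require Import Reals List Arith Bool ClassicalEpsilon.
Import ListNotations.
Open Scope R_scope.

(* Literal x_{i+1} is [Lit i true], its complement is [Lit i false] (0-based index). *)
Inductive lit : Type := Lit (i : nat) (pos : bool).
Definition lidx (l : lit) : nat := let (i, _) := l in i.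
Definition lpos (l : lit) : bool := let (_, b) := l in b.

Inductive ntree : Type := Leaf (l : lit) | J (a b : ntree).
(* A syntax tree is either empty (None) or a nonempty tree. *)
Definition tree : Type := option ntree.

Definition terminals (n : nat) : list lit :=
  flat_map (fun i => [Lit i true; Lit i false]) (seq 0 n).

Fixpoint nsize (t : ntree) : nat :=
  match t with Leaf _ => 1%nat | J a b => S (nsize a + nsize b) end.
Definition complexity (X : tree) : nat :=
  match X with None => 0%nat | Some t => nsize t end.

Fixpoint nleaves (t : ntree) : list lit :=
  match t with Leaf l => [l] | J a b => nleaves a ++ nleaves b end.
Definition leaf_list (X : tree) : list lit :=
  match X with None => [] | Some t => nleaves t end.

Definition valid (n : nat) (X : tree) : Prop :=
  forall l, In l (leaf_list X) -> In l (terminals n).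

Fixpoint order_scan (S : list lit) (l : list lit) : list lit :=
  match l with
  | [] => S
  | x :: r => if existsb (fun y => Nat.eqb (lidx y) (lidx x)) S
              then order_scan S r else order_scan (S ++ [x]) r
  end.

Definition worder (w : nat -> R) (X : tree) : R :=
  fold_right (fun l acc => (if lpos l then w (lidx l) else 0) + acc) 0
    (order_scan [] (leaf_list X)).

Definition count_lit (i : nat) (b : bool) (l : list lit) : nat :=
  length (filter (fun y => Nat.eqb (lidx y) i && Bool.eqb (lpos y) b) l).

Definition wmajority (w : nat -> R) (n : nat) (X : tree) : R :=
  fold_right (fun i acc =>
     (let cp := count_lit i true (leaf_list X) in
      let cn := count_lit i false (leaf_list X) in
      if Nat.leb 1 cp && Nat.leb cn cp then w i else 0) + acc) 0 (seq 0 n).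

Definition ORDER (X : tree) : R := worder (fun _ => 1) X.
Definition MAJORITY (n : nat) (X : tree) : R := wmajority (fun _ => 1) n X.

Definition nleafc (t : ntree) : nat := length (nleaves t).

(* replace the j-th leaf (inorder, 0-based) by u *)
Fixpoint subst_at (t : ntree) (j : nat) (u : lit) : ntree :=
  match t with
  | Leaf l => match j with O => Leaf u | _ => Leaf l end
  | J a b => if Nat.ltb j (nleafc a) then J (subst_at a j u) b
             else J a (subst_at b (j - nleafc a) u)
  end.

(* replace the k-th node (preorder, 0-based) v by J u v (b = true) or J v u (b = false) *)
Fixpoint ins_at (t : ntree) (k : nat) (u : lit) (b : bool) : ntree :=
  match k with
  | O => if b then J (Leaf u) t else J t (Leaf u)
  | S k' => match t with
            | Leaf l => Leaf l
            | J a c => if Nat.ltb k' (nsize a) then J (ins_at a k' u b) c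
                       else J a (ins_at c (k' - nsize a) u b)
            end
  end.

(* delete the j-th leaf (inorder): its parent is replaced by its sibling;
   None = the result is the empty tree (deleting the only leaf) *)
Fixpoint del_at (t : ntree) (j : nat) : option ntree :=
  match t with
  | Leaf _ => None
  | J a b => if Nat.ltb j (nleafc a)
             then match del_at a j with None => Some b | Some a' => Some (J a' b) end
             else match del_at b (j - nleafc a) with None => Some a | Some b' => Some (J a b') end
  end.

(* Distribution (finite list of (probability, outcome)) of one HVL-Prime
   application.  Each of the three operations has probability 1/3.
   On the empty tree, substitute and delete are not applicable and leave
   the tree unchanged; insert yields a single leaf u. *)
Definition mutate (n : nat) (X : tree) : list (R * tree) :=
  let Tn := terminals n in
  let m := INR (length Tn) in
  match X with
  | None =>
      [(1/3, None)]
      ++ map (fun u => (1/3 * / m, Some (Leaf u))) Tn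
      ++ [(1/3, None)]
  | Some t =>
      let L := INR (nleafc t) in
      let C := INR (nsize t) in
      flat_map (fun j => map (fun u => (1/3 * / L * / m, Some (subst_at t j u))) Tn)
               (seq 0 (nleafc t))
      ++ flat_map (fun k => flat_map (fun u =>
               [(1/3 * / C * / m * / 2, Some (ins_at t k u true));
                (1/3 * / C * / m * / 2, Some (ins_at t k u false))]) Tn)
               (seq 0 (nsize t))
      ++ map (fun j => (1/3 * / L, del_at t j)) (seq 0 (nleafc t))
  end.

Definition accept (F : tree -> R) (X Y : tree) : bool :=
  if Rlt_dec (F X) (F Y) then true
  else if Req_dec_T (F Y) (F X) then Nat.leb (complexity Y) (complexity X)
  else false.

Definition select (F : tree -> R) (X Y : tree) : tree :=
  if accept F X Y then Y else X.

Definition optimal (n : nat) (F : tree -> R) (X : tree) : Prop :=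
  valid n X /\
  (forall Y, valid n Y -> F Y <= F X) /\
  (forall Y, valid n Y -> F Y = F X -> (complexity X <= complexity Y)%nat).

Definition optb (n : nat) (F : tree -> R) (X : tree) : bool :=
  if excluded_middle_informative (optimal n F X) then true else false.

(* one iteration applied to a sub-distribution; runs that are already
   optimal are removed (stopped) *)
Definition step (n : nat) (F : tree -> R) (mu : list (R * tree)) : list (R * tree) :=
  flat_map (fun qX =>
     if optb n F (snd qX) then []
     else map (fun pY => (fst qX * fst pY, select F (snd qX) (snd pY)))
              (mutate n (snd qX))) mu.

(* law of X_t on the event that X_0, ..., X_{t-1} are all non-optimal *)
Fixpoint law (n : nat) (F : tree -> R) (X0 : tree) (t : nat) : list (R * tree) :=
  match t with
  | O => [(1, X0)]
  | S t' => step n F (law n F X0 t')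
  end.

(* P(tau > t) : probability that X_0, ..., X_t are all non-optimal *)
Definition surv (n : nat) (F : tree -> R) (X0 : tree) (t : nat) : R :=
  fold_right (fun qX acc => (if optb n F (snd qX) then 0 else fst qX) + acc) 0
    (law n F X0 t).

Definition partial_time (n : nat) (F : tree -> R) (X0 : tree) (N : nat) : R :=
  fold_right (fun t acc => surv n F X0 t + acc) 0 (seq 0 N).

(* E[tau] = sum_{t >= 0} P(tau > t) (possibly +infinity) is at least x *)
Definition expected_time_ge (n : nat) (F : tree -> R) (X0 : tree) (x : R) : Prop :=
  forall y, y < x -> exists N, y <= partial_time n F X0 N.

(* Main.v *)
Require Import Defs.
From Stdlib Require Import Reals List Arith Bool Lia Lra ClassicalEpsilon.
Import ListNotations.
Open Scope R_scope.

Definition sumR {A} (h : A -> R) (l : list A) : R := fold_right (fun x acc => h x + acc) 0 l.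

Lemma sumR_app {A} (h : A -> R) a b : sumR h (a ++ b) = sumR h a + sumR h b.
Proof. induction a; simpl; [lra|]. unfold sumR in *; simpl; rewrite IHa; lra. Qed.
Lemma sumR_map {A B} (h : B -> R) (k : A -> B) l : sumR h (map k l) = sumR (fun x => h (k x)) l.
Proof. induction l; simpl; auto. unfold sumR in *; simpl; rewrite IHl; auto. Qed.
Lemma sumR_flat_map {A B} (h : B -> R) (k : A -> list B) l :
  sumR h (flat_map k l) = sumR (fun x => sumR h (k x)) l.
Proof. induction l; simpl; auto. rewrite sumR_app. unfold sumR in *; simpl; rewrite IHl; auto. Qed.
Lemma sumR_le {A} (f g : A -> R) l : (forall x, In x l -> f x <= g x) -> sumR f l <= sumR g l.
Proof. induction l; simpl; intros H; [lra|]. unfold sumR in *; simpl.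
  pose proof (H a (or_introl eq_refl)). assert (fold_right (fun x acc => f x + acc) 0 l <= fold_right (fun x acc => g x + acc) 0 l) by (apply IHl; auto). lra. Qed.
Lemma sumR_ext {A} (f g : A -> R) l : (forall x, In x l -> f x = g x) -> sumR f l = sumR g l.
Proof. intros H; apply Rle_antisym; apply sumR_le; intros x Hx; rewrite H; auto; lra. Qed.
Lemma sumR_scal {A} (f : A -> R) c l : sumR (fun x => c * f x) l = c * sumR f l.
Proof. induction l; unfold sumR in *; simpl; [lra|]. rewrite IHl; lra. Qed.
Lemma sumR_const {A} c (l : list A) : sumR (fun _ => c) l = INR (length l) * c.
Proof. induction l; unfold sumR in *; simpl length; [simpl; lra|]. rewrite S_INR. simpl. rewrite IHl; lra. Qed.
Lemma sumR_plus {A} (f g : A -> R) l : sumR (fun x => f x + g x) l = sumR f l + sumR g l.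
Proof. induction l; unfold sumR in *; simpl; [lra|]. rewrite IHl; lra. Qed.
Lemma sumR_ind {A} (p : A -> bool) c l : sumR (fun x => if p x then c else 0) l = INR (length (filter p l)) * c.
Proof. induction l; unfold sumR in *; simpl; [lra|]. rewrite IHl. destruct (p a); simpl length; try rewrite S_INR; lra. Qed.
Lemma sumR_nonneg {A} (f : A -> R) l : (forall x, In x l -> 0 <= f x) -> 0 <= sumR f l.
Proof. intros H. replace 0 with (sumR (fun _ : A => 0) l). apply sumR_le; auto.
  rewrite sumR_const; lra. Qed.

Lemma filter_len_mono {A} (p q : A -> bool) l : (forall i, In i l -> p i = true -> q i = true) ->
  (length (filter p l) <= length (filter q l))%nat.
Proof. induction l; simpl; intros H; auto. destruct (p a) eqn:E.
  - rewrite (H a (or_introl eq_refl) E). simpl. specialize (IHl (fun i Hi => H i (or_intror Hi))). lia.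
  - specialize (IHl (fun i Hi => H i (or_intror Hi))). destruct (q a); simpl; lia. Qed.

Lemma filter_len_le1 {A} (p q : A -> bool) (j : A) (b : bool) l : NoDup l ->
  (forall i, In i l -> p i = true -> q i = true \/ (i = j /\ b = true)) ->
  (length (filter p l) <= length (filter q l) + (if b then 1 else 0))%nat.
Proof. induction l; simpl; intros Hn H; [lia|]. inversion Hn; subst.
  destruct (p a) eqn:E.
  - destruct (q a) eqn:Eq.
    + simpl. specialize (IHl H3 (fun i Hi => H i (or_intror Hi))). lia.
    + destruct (H a (or_introl eq_refl) E) as [C|[-> ->]]; [congruence|].
      assert (length (filter p l) <= length (filter q l))%nat.
      { apply filter_len_mono. intros i Hi Hp. destruct (H i (or_intror Hi) Hp) as [?|[-> _]]; auto. }
      simpl. lia.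
  - specialize (IHl H3 (fun i Hi => H i (or_intror Hi))). destruct (q a); simpl; lia. Qed.
Lemma sumR_cons {A} (h : A -> R) a l : sumR h (a :: l) = h a + sumR h l.
Proof. reflexivity. Qed.
Definition presb (X : tree) (i : nat) : bool :=
  existsb (fun y => Nat.eqb (lidx y) i && lpos y) (leaf_list X).
Definition kk (n : nat) (X : tree) : nat := length (filter (fun i => negb (presb X i)) (seq 0 n)).
Fixpoint Hh (k : nat) : R := match k with O => 0 | S k' => Hh k' + / INR (S k') end.
Definition gg (n : nat) (X : tree) : R := 3 * INR n * Hh (kk n X).
Definition missu (n : nat) (X : tree) (u : lit) : bool :=
  Nat.ltb (lidx u) n && lpos u && negb (presb X (lidx u)).
Definition dd (n : nat) (X : tree) (u : lit) : R :=
  if missu n X u then 3 * INR n * / INR (kk n X) else 0.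

Lemma Hh_nonneg k : 0 <= Hh k.
Proof. induction k; cbn [Hh]; [lra|]. pose proof (pos_INR k). assert (0 < / INR (S k)) by (apply Rinv_0_lt_compat; rewrite S_INR; lra). lra. Qed.
Lemma Hh_mono k k' : (k <= k')%nat -> Hh k <= Hh k'.
Proof. induction 1; [lra|]. cbn [Hh]. assert (0 < / INR (S m)) by (apply Rinv_0_lt_compat; rewrite S_INR; pose proof (pos_INR m); lra). lra. Qed.

Lemma kk_le n X : (kk n X <= n)%nat.
Proof. unfold kk. pose proof (filter_length (fun i => negb (presb X i)) (seq 0 n)). rewrite length_seq in H. lia. Qed.

Lemma filter_true {A} (p : A -> bool) l : (forall x, p x = true) -> filter p l = l.
Proof. intros H; induction l; simpl; auto. rewrite H, IHl; auto. Qed.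

Lemma kk_None n : kk n None = n.
Proof. unfold kk. rewrite filter_true; [apply length_seq|]. intros; reflexivity. Qed.

Lemma presb_iff X i : presb X i = true <-> In (Lit i true) (leaf_list X).
Proof. unfold presb. rewrite existsb_exists. split.
  - intros [[j b] [Hin Hb]]. simpl in Hb. apply andb_true_iff in Hb as [H1 H2].
    apply Nat.eqb_eq in H1. subst. auto.
  - intros H. exists (Lit i true). split; auto. simpl. rewrite Nat.eqb_refl. auto. Qed.

Lemma kk_incl n X Y u : incl (leaf_list Y) (u :: leaf_list X) ->
  (kk n X <= kk n Y + (if missu n X u then 1 else 0))%nat.
Proof. intros Hinc. unfold kk. apply filter_len_le1 with (j := lidx u); [apply seq_NoDup|].
  intros i Hi Hp. apply negb_true_iff in Hp.
  destruct (presb Y i) eqn:EY; [|left; reflexivity]. right.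
  apply presb_iff in EY. apply Hinc in EY. destruct EY as [->|EY].
  - simpl. split; auto. unfold missu. simpl. apply in_seq in Hi.
    rewrite Hp. replace (Nat.ltb i n) with true; [reflexivity|]. symmetry; apply Nat.ltb_lt; lia.
  - apply presb_iff in EY. congruence. Qed.

Lemma kk_incl0 n X Y : incl (leaf_list Y) (leaf_list X) -> (kk n X <= kk n Y)%nat.
Proof. intros H. pose proof (kk_incl n X Y (Lit 0 false)) as K.
  unfold missu in K; simpl in K. rewrite andb_false_r in K. simpl in K.
  assert (incl (leaf_list Y) (Lit 0 false :: leaf_list X)) by (intros x Hx; right; auto). specialize (K H0). lia. Qed.

Lemma gg_incl n X Y u : incl (leaf_list Y) (u :: leaf_list X) -> gg n X - gg n Y <= dd n X u.
Proof. intros Hinc. pose proof (kk_incl n X Y u Hinc) as K. unfold gg, dd.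
  pose proof (pos_INR n) as Pn.
  destruct (missu n X u) eqn:E.
  - assert (1 <= kk n X)%nat.
    { unfold kk. unfold missu in E. apply andb_true_iff in E as [E1 E3]. apply andb_true_iff in E1 as [E1 E2].
      apply Nat.ltb_lt in E1. destruct (filter (fun i => negb (presb X i)) (seq 0 n)) eqn:F; simpl; [|lia].
      assert (In (lidx u) (filter (fun i => negb (presb X i)) (seq 0 n))) by (apply filter_In; split; [apply in_seq; lia| auto]).
      rewrite F in H; inversion H. }
    destruct (kk n X) as [|k'] eqn:EK; [lia|]. cbn [Hh].
    assert (Hh k' <= Hh (kk n Y)) by (apply Hh_mono; lia). nra.
  - assert (Hh (kk n X) <= Hh (kk n Y)) by (apply Hh_mono; lia). nra. Qed.

Lemma gg_incl0 n X Y : incl (leaf_list Y) (leaf_list X) -> gg n X - gg n Y <= 0.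
Proof. intros H. pose proof (kk_incl0 n X Y H). unfold gg. pose proof (pos_INR n).
  assert (Hh (kk n X) <= Hh (kk n Y)) by (apply Hh_mono; lia). nra. Qed.

Lemma dd_nonneg n X u : 0 <= dd n X u.
Proof. unfold dd. destruct missu; [|lra]. pose proof (pos_INR n). pose proof (pos_INR (kk n X)).
  destruct (Req_dec (INR (kk n X)) 0) as [E|E]. rewrite E, Rinv_0. lra.
  assert (0 < / INR (kk n X)) by (apply Rinv_0_lt_compat; lra). nra. Qed.

Lemma dd_sum n X : sumR (dd n X) (terminals n) <= 3 * INR n.
Proof. unfold terminals. rewrite sumR_flat_map.
  rewrite (sumR_ext _ (fun i => if negb (presb X i) then 3 * INR n * / INR (kk n X) else 0)).
  - rewrite sumR_ind. fold (kk n X). pose proof (pos_INR n).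
    destruct (Req_dec (INR (kk n X)) 0) as [E|E]. rewrite E; lra.
    field_simplify; lra.
  - intros i Hi. apply in_seq in Hi. unfold sumR; simpl. unfold dd, missu; simpl.
    replace (Nat.ltb i n) with true by (symmetry; apply Nat.ltb_lt; lia). simpl. lra. Qed.

Lemma subst_incl t j u : incl (nleaves (subst_at t j u)) (u :: nleaves t).
Proof. revert j; induction t as [l|a IHa b IHb]; intros j x Hx; simpl in *.
  - destruct j; simpl in Hx; tauto.
  - destruct (Nat.ltb j (nleafc a)); simpl in Hx; rewrite in_app_iff in *.
    + destruct Hx as [Hx|Hx]; [apply IHa in Hx; simpl in Hx|]; tauto.
    + destruct Hx as [Hx|Hx]; [|apply IHb in Hx; simpl in Hx]; tauto. Qed.

Lemma ins_incl t k u b : incl (nleaves (ins_at t k u b)) (u :: nleaves t).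
Proof. revert k; induction t as [l|a IHa c IHc]; intros k x Hx; destruct k; simpl in *.
  - destruct b; simpl in Hx; rewrite ?in_app_iff in Hx; simpl in Hx; tauto.
  - tauto.
  - destruct b; simpl in Hx; rewrite ?in_app_iff in *; simpl in *; tauto.
  - destruct (Nat.ltb k (nsize a)); simpl in Hx; rewrite in_app_iff in *.
    + destruct Hx as [Hx|Hx]; [apply IHa in Hx; simpl in Hx|]; tauto.
    + destruct Hx as [Hx|Hx]; [|apply IHc in Hx; simpl in Hx]; tauto. Qed.

Lemma del_incl t j : incl (leaf_list (del_at t j)) (nleaves t).
Proof. revert j; induction t as [l|a IHa b IHb]; intros j x Hx; simpl in *.
  - contradiction.
  - rewrite in_app_iff. destruct (Nat.ltb j (nleafc a)).
    + specialize (IHa j). destruct (del_at a j); simpl in *; [rewrite in_app_iff in Hx|]; firstorder.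
    + specialize (IHb ((j - nleafc a)%nat)). destruct (del_at b ((j - nleafc a)%nat)); simpl in *; [rewrite in_app_iff in Hx|]; firstorder. Qed.

Lemma nleafc_pos t : (1 <= nleafc t)%nat.
Proof. unfold nleafc; induction t; simpl; auto. rewrite length_app; lia. Qed.
Lemma nsize_pos t : (1 <= nsize t)%nat.
Proof. destruct t; simpl; lia. Qed.

Lemma terminals_length n : length (terminals n) = (2 * n)%nat.
Proof. unfold terminals. induction n; [reflexivity|]. rewrite seq_S, flat_map_app, length_app, IHn. simpl. lia. Qed.

Lemma inv_nonneg x : 0 <= x -> 0 <= / x.
Proof. intros H. destruct (Req_dec x 0) as [->|E]. rewrite Rinv_0; lra. left; apply Rinv_0_lt_compat; lra. Qed.

Lemma mutate_nonneg n X e : In e (mutate n X) -> 0 <= fst e.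
Proof. pose proof (pos_INR (length (terminals n))) as P0.
  destruct X as [t|]; simpl; intros H.
  - pose proof (inv_nonneg _ P0). pose proof (inv_nonneg _ (pos_INR (nleafc t))).
    pose proof (inv_nonneg _ (pos_INR (nsize t))).
    repeat rewrite in_app_iff in H. destruct H as [H|[H|H]].
    + apply in_flat_map in H as [j [_ H]]. apply in_map_iff in H as [u [<- _]]. simpl.
      repeat apply Rmult_le_pos; lra.
    + apply in_flat_map in H as [j [_ H]]. apply in_flat_map in H as [u [_ H]].
      simpl in H. destruct H as [<-|[<-|[]]]; simpl; repeat apply Rmult_le_pos; lra.
    + apply in_map_iff in H as [u [<- _]]. simpl. repeat apply Rmult_le_pos; lra.
  - pose proof (inv_nonneg _ P0). destruct H as [<-|H]; simpl; [lra|].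
    rewrite in_app_iff in H. destruct H as [H|[<-|[]]]; simpl; [|lra].
    apply in_map_iff in H as [u [<- _]]; simpl. apply Rmult_le_pos; lra. Qed.

Lemma mutate_mass n X : (1 <= n)%nat -> sumR fst (mutate n X) = 1.
Proof. intros Hn. pose proof (terminals_length n) as TL.
  assert (Pn : 1 <= INR n) by (apply (le_INR 1); auto).
  set (m := INR (length (terminals n))).
  assert (Hm : m = 2 * INR n) by (unfold m; rewrite TL, mult_INR; simpl; lra).
  destruct X as [t|]; simpl mutate; change (INR (length (terminals n))) with m.
  - repeat rewrite sumR_app. repeat rewrite sumR_flat_map.
    assert (PL : 1 <= INR (nleafc t)) by (apply (le_INR 1); apply nleafc_pos).
    assert (PC : 1 <= INR (nsize t)) by (apply (le_INR 1); apply nsize_pos).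
    rewrite (sumR_ext _ (fun _ => INR (length (terminals n)) * (1/3 * / INR (nleafc t) * / m))).
    2:{ intros j _. rewrite sumR_map. simpl fst. apply sumR_const. }
    rewrite (sumR_ext (fun x => sumR fst (flat_map _ _)) (fun _ => INR (length (terminals n)) * (2 * (1/3 * / INR (nsize t) * / m * / 2)))).
    2:{ intros j _. rewrite sumR_flat_map. rewrite <- sumR_const. apply sumR_ext. intros u _.
        cbn [sumR fold_right fst]. lra. }
    rewrite sumR_map. simpl fst. rewrite !sumR_const, !length_seq. fold m. rewrite Hm. field. lra.
  - rewrite sumR_cons, sumR_app, sumR_map. simpl fst. rewrite sumR_const.
    cbn [sumR fold_right fst]. fold m. rewrite Hm. field. lra. Qed.

Lemma mutate_drift n X (h : tree -> R) : (1 <= n)%nat ->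
  (forall u Y, incl (leaf_list Y) (u :: leaf_list X) -> h Y <= dd n X u) ->
  sumR (fun e => fst e * h (snd e)) (mutate n X) <= 1.
Proof. intros Hn Hh. pose proof (terminals_length n) as TL.
  assert (Pn : 1 <= INR n) by (apply (le_INR 1); auto).
  set (m := INR (length (terminals n))).
  assert (Hm : m = 2 * INR n) by (unfold m; rewrite TL, mult_INR; simpl; lra).
  assert (Hmi : 0 <= / m) by (apply inv_nonneg; lra).
  pose proof (dd_sum n X) as DS.
  assert (DSn : 0 <= sumR (dd n X) (terminals n)) by (apply sumR_nonneg; intros; apply dd_nonneg).
  set (S := sumR (dd n X) (terminals n)) in *.
  destruct X as [t|]; simpl mutate; change (INR (length (terminals n))) with m.
  - assert (PL : 1 <= INR (nleafc t)) by (apply (le_INR 1); apply nleafc_pos).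
    assert (PC : 1 <= INR (nsize t)) by (apply (le_INR 1); apply nsize_pos).
    assert (HL : 0 <= / INR (nleafc t)) by (apply inv_nonneg; lra).
    assert (HC : 0 <= / INR (nsize t)) by (apply inv_nonneg; lra).
    repeat rewrite sumR_app. repeat rewrite sumR_flat_map.
    assert (A1 : sumR (fun x => sumR (fun e => fst e * h (snd e))
          (map (fun u => (1 / 3 * / INR (nleafc t) * / m, Some (subst_at t x u))) (terminals n))) (seq 0 (nleafc t))
        <= sumR (fun _ => 1 / 3 * / INR (nleafc t) * / m * S) (seq 0 (nleafc t))).
    { apply sumR_le. intros j _. rewrite sumR_map. unfold S. rewrite <- sumR_scal. apply sumR_le.
      intros u _. simpl fst; simpl snd. apply Rmult_le_compat_l. repeat apply Rmult_le_pos; lra.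
      apply Hh. apply subst_incl. }
    assert (A2 : sumR (fun x => sumR (fun e => fst e * h (snd e)) (flat_map (fun u =>
          [(1 / 3 * / INR (nsize t) * / m * / 2, Some (ins_at t x u true));
           (1 / 3 * / INR (nsize t) * / m * / 2, Some (ins_at t x u false))]) (terminals n))) (seq 0 (nsize t))
        <= sumR (fun _ => 2 * (1 / 3 * / INR (nsize t) * / m * / 2) * S) (seq 0 (nsize t))).
    { apply sumR_le. intros j _. rewrite sumR_flat_map. unfold S. rewrite <- sumR_scal. apply sumR_le.
      intros u _. cbn [sumR fold_right fst snd].
      pose proof (Hh u (Some (ins_at t j u true)) (ins_incl t j u true)). pose proof (Hh u (Some (ins_at t j u false)) (ins_incl t j u false)).
      assert (0 <= 1 / 3 * / INR (nsize t) * / m * / 2) by (repeat apply Rmult_le_pos; lra). nra. }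
    assert (A3 : sumR (fun e => fst e * h (snd e)) (map (fun j => (1 / 3 * / INR (nleafc t), del_at t j)) (seq 0 (nleafc t))) <= 0).
    { rewrite sumR_map. rewrite <- (Rmult_0_r (INR (length (seq 0 (nleafc t))))). rewrite <- sumR_const.
      apply sumR_le. intros j _. simpl fst; simpl snd.
      assert (h (del_at t j) <= 0).
      { replace 0 with (dd n (Some t) (Lit 0 false)) by (unfold dd, missu; simpl; rewrite andb_false_r; reflexivity).
        apply Hh. intros x Hx; right; exact (del_incl t j x Hx). }
      assert (0 <= 1/3 * / INR (nleafc t)) by (apply Rmult_le_pos; lra). nra. }
    rewrite !sumR_const, !length_seq in *.
    assert (E1 : INR (nleafc t) * (1 / 3 * / INR (nleafc t) * / m * S) = S / (3 * m)) by (field; lra).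
    assert (E2 : INR (nsize t) * (2 * (1 / 3 * / INR (nsize t) * / m * / 2) * S) = S / (3 * m)) by (field; lra).
    assert (E3 : S / (3 * m) <= 1/2).
    { rewrite Hm. apply (Rmult_le_reg_r (6 * INR n)); [lra|]. field_simplify; lra. }
    lra.
  - rewrite sumR_cons, sumR_app, sumR_map. cbn [sumR fold_right fst snd].
    assert (h None <= 0).
    { replace 0 with (dd n None (Lit 0 false)) by (unfold dd, missu; simpl; rewrite andb_false_r; reflexivity).
      apply Hh. intros x [].  }
    assert (B : sumR (fun x => 1/3 * / m * h (Some (Leaf x))) (terminals n) <= (1/3 * / m) * S).
    { unfold S. rewrite <- sumR_scal. apply sumR_le. intros u _.
      apply Rmult_le_compat_l; [apply Rmult_le_pos; lra|]. apply Hh. intros x [<-|[]]; left; auto. }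
    assert (E3 : 1/3 * / m * S <= 1/2).
    { rewrite Hm. apply (Rmult_le_reg_r (6 * INR n)); [lra|]. field_simplify; lra. }
    clearbody S m. lra. Qed.

Lemma sumR_minus {A} (f g : A -> R) l : sumR f l - sumR g l = sumR (fun x => f x - g x) l.
Proof. induction l; unfold sumR in *; simpl; [lra|]. rewrite <- IHl; lra. Qed.

Definition gq (n : nat) (e : R * tree) : R := fst e * gg n (snd e).
Definition survof (n : nat) (F : tree -> R) (mu : list (R * tree)) : R :=
  sumR (fun qX => if optb n F (snd qX) then 0 else fst qX) mu.

Lemma gg_le_None n X : gg n X <= gg n None.
Proof. unfold gg. rewrite kk_None. pose proof (kk_le n X). pose proof (pos_INR n).
  assert (Hh (kk n X) <= Hh n) by (apply Hh_mono; auto). nra. Qed.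

Section Main.
Variable n : nat.
Variable F : tree -> R.
Hypothesis Hn : (1 <= n)%nat.
Hypothesis Hopt : forall X, optb n F X = true -> kk n X = 0%nat.

Lemma gg_opt X : optb n F X = true -> gg n X = 0.
Proof. intros H. unfold gg. rewrite (Hopt X H). simpl. lra. Qed.

Lemma step_nonneg mu : (forall e, In e mu -> 0 <= fst e) -> forall e, In e (step n F mu) -> 0 <= fst e.
Proof. intros H e He. unfold step in He. apply in_flat_map in He as [qX [Hq He]].
  destruct (optb n F (snd qX)); [destruct He|]. apply in_map_iff in He as [pY [<- Hp]]. simpl.
  apply Rmult_le_pos; [apply H; auto| apply (mutate_nonneg n (snd qX)); auto]. Qed.

Lemma law_nonneg X0 t : forall e, In e (law n F X0 t) -> 0 <= fst e.
Proof. induction t; simpl. intros e [<-|[]]; simpl; lra. apply step_nonneg; auto. Qed.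

Lemma sel_drift X : sumR (fun pY => fst pY * gg n (select F X (snd pY))) (mutate n X) >= gg n X - 1.
Proof.
  pose proof (mutate_drift n X (fun Y => gg n X - gg n (select F X Y)) Hn) as D.
  assert (D' : sumR (fun e => fst e * (gg n X - gg n (select F X (snd e)))) (mutate n X) <= 1).
  { apply D. intros u Y Hi. unfold select. destruct (accept F X Y).
    - apply gg_incl; auto.
    - pose proof (dd_nonneg n X u); lra. }
  clear D. rewrite (sumR_ext (fun e => fst e * (gg n X - gg n (select F X (snd e)))) (fun e => gg n X * fst e - fst e * gg n (select F X (snd e)))) in D' by (intros; ring).
  rewrite <- sumR_minus, sumR_scal, mutate_mass in D' by auto. lra. Qed.

Lemma step_G mu : (forall e, In e mu -> 0 <= fst e) ->
  sumR (gq n) (step n F mu) >= sumR (gq n) mu - survof n F mu.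
Proof. intros Hnn. unfold step, survof. rewrite sumR_flat_map, sumR_minus.
  apply Rle_ge, sumR_le. intros [q X] Hin. simpl snd. simpl fst.
  destruct (optb n F X) eqn:E.
  - unfold gq; simpl. rewrite gg_opt by auto. cbn. lra.
  - rewrite sumR_map. unfold gq. simpl fst; simpl snd.
    rewrite (sumR_ext _ (fun pY => q * (fst pY * gg n (select F X (snd pY))))) by (intros; ring).
    rewrite sumR_scal. pose proof (sel_drift X). pose proof (Hnn _ Hin); simpl in *. nra. Qed.

Lemma survof_le_mass mu : (forall e, In e mu -> 0 <= fst e) -> survof n F mu <= sumR fst mu.
Proof. intros H. apply sumR_le. intros e He. destruct optb; [apply H; auto|lra]. Qed.

Lemma step_S mu : (forall e, In e mu -> 0 <= fst e) -> survof n F (step n F mu) <= survof n F mu.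
Proof. intros Hnn. eapply Rle_trans. apply survof_le_mass, step_nonneg; auto.
  unfold step, survof. rewrite sumR_flat_map. apply sumR_le. intros [q X] Hin. simpl.
  destruct (optb n F X); [cbn; lra|]. rewrite sumR_map. simpl.
  try rewrite (sumR_ext _ (fun pY => q * fst pY)) by (intros; reflexivity).
  rewrite sumR_scal, mutate_mass by auto. lra. Qed.

Lemma G_le mu : (forall e, In e mu -> 0 <= fst e) -> sumR (gq n) mu <= gg n None * survof n F mu.
Proof. intros Hnn. unfold survof. rewrite <- sumR_scal. apply sumR_le. intros [q X] Hin. unfold gq; simpl.
  pose proof (Hnn _ Hin); simpl in *.
  destruct (optb n F X) eqn:E. rewrite gg_opt by auto. lra.
  pose proof (gg_le_None n X). nra. Qed.

Lemma surv_eq t : surv n F None t = survof n F (law n F None t).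
Proof. reflexivity. Qed.
Lemma pt_S N : partial_time n F None (S N) = partial_time n F None N + surv n F None N.
Proof. unfold partial_time. rewrite seq_S, fold_right_app. simpl.
  generalize (surv n F None N). induction (seq 0 N); intros; simpl; [lra|]. rewrite IHl; lra. Qed.

Lemma surv_nonneg t : 0 <= surv n F None t.
Proof. rewrite surv_eq. apply sumR_nonneg. intros e He. destruct optb; [lra|]. eapply law_nonneg; eauto. Qed.

Lemma surv_mono t : surv n F None (S t) <= surv n F None t.
Proof. rewrite !surv_eq. simpl law. apply step_S. apply law_nonneg. Qed.

Lemma telescope N : sumR (gq n) (law n F None N) >= gg n None - partial_time n F None N.
Proof. induction N.
  - simpl. unfold gq. cbn. lra.
  - rewrite pt_S. simpl law. pose proof (step_G (law n F None N) (law_nonneg None N)).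
    rewrite <- surv_eq in H. lra. Qed.

Lemma pt_lin N : partial_time n F None N >= INR N * surv n F None N.
Proof. induction N. simpl. unfold partial_time. simpl. lra.
  rewrite pt_S, S_INR. pose proof (surv_mono N). pose proof (surv_nonneg (S N)). pose proof (pos_INR N). nra. Qed.

Lemma pt_G N : partial_time n F None N >= gg n None * (1 - surv n F None N).
Proof. pose proof (telescope N). pose proof (G_le _ (law_nonneg None N)). rewrite <- surv_eq in H0. lra. Qed.

Lemma exp_time x : x <= gg n None -> expected_time_ge n F None x.
Proof. intros Hx y Hy. destruct (Rle_dec y 0) as [Hy0|Hy0].
  - exists 0%nat. unfold partial_time. simpl. lra.
  - set (G := gg n None) in *.
    destruct (INR_unbounded (y * G / (G - y))) as [N HN]. exists N.
    pose proof (pt_lin N). pose proof (pt_G N). fold G in H0.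
    set (s := surv n F None N) in *.
    destruct (Rle_dec s ((G - y) / G)) as [Hs|Hs].
    + apply Rle_ge in Hs. assert (G * s <= G - y).
      { apply Rge_le in Hs. apply (Rmult_le_compat_l G) in Hs; [|lra]. field_simplify in Hs; lra. }
      lra.
    + assert (INR N * s >= y).
      { assert (s * G > G - y).
        { apply Rnot_le_lt in Hs. apply (Rmult_lt_compat_r G) in Hs; [|lra]. field_simplify in Hs; lra. }
        assert (INR N * (G - y) > y * G).
        { apply (Rmult_lt_compat_r (G - y)) in HN; [|lra]. field_simplify in HN; lra. }
        assert (0 <= INR N) by apply pos_INR. nra. }
      lra. Qed.
End Main.

Lemma opt_kk n F : (exists Yw, valid n Yw /\ INR n <= F Yw) ->
  (forall X, valid n X -> F X + INR (kk n X) <= INR n) ->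
  forall X, optb n F X = true -> kk n X = 0%nat.
Proof. intros [Yw [HY1 HY2]] Hb X Ho. unfold optb in Ho.
  destruct (excluded_middle_informative (optimal n F X)) as [[Hv [Hm _]]|]; [|discriminate].
  pose proof (Hm Yw HY1). pose proof (Hb X Hv).
  assert (INR (kk n X) <= 0) by lra. pose proof (pos_INR (kk n X)).
  apply INR_eq. simpl. lra. Qed.

Lemma pres_count n X : (length (filter (presb X) (seq 0 n)) + kk n X)%nat = n.
Proof. unfold kk. rewrite filter_length. apply length_seq. Qed.

Lemma term_lt n x : In x (terminals n) -> (lidx x < n)%nat.
Proof. unfold terminals. intros H. apply in_flat_map in H as [i [Hi H]]. apply in_seq in Hi.
  destruct H as [<-|[<-|[]]]; simpl; lia. Qed.

Lemma NoDup_snoc {A} (l : list A) a : NoDup l -> ~ In a l -> NoDup (l ++ [a]).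
Proof. induction l; simpl; intros H1 H2.
  - constructor; [intros []|constructor].
  - inversion H1; subst. constructor.
    + intro Hi; rewrite in_app_iff in Hi; simpl in Hi; destruct Hi as [?|[?|[]]]; [contradiction| apply H2; left; auto].
    + apply IHl; auto. Qed.

Lemma NoDup_map_filter {A B} (f : A -> B) p l : NoDup (map f l) -> NoDup (map f (filter p l)).
Proof. induction l; simpl; intros H; auto. inversion H; subst. destruct (p a); simpl; auto.
  constructor; auto. intros Hi. apply in_map_iff in Hi as [y [Hy Hy2]]. apply filter_In in Hy2 as [Hy2 _].
  apply H2. apply in_map_iff. eauto. Qed.

Lemma scan_spec L : forall S, exists S', order_scan S L = S ++ S' /\ (forall x, In x S' -> In x L) /\
  (NoDup (map lidx S) -> NoDup (map lidx (S ++ S'))).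
Proof. induction L as [|x r IH]; intros S; simpl.
  - exists []. rewrite app_nil_r. split; auto.
  - destruct (existsb (fun y => Nat.eqb (lidx y) (lidx x)) S) eqn:E.
    + destruct (IH S) as [S' [H1 [H2 H3]]]. exists S'. split; auto.
    + destruct (IH (S ++ [x])) as [S' [H1 [H2 H3]]]. exists (x :: S'). rewrite H1, <- app_assoc. simpl.
      split; auto. split. intros y [<-|Hy]; auto.
      intros Hn. change (S ++ x :: S') with (S ++ [x] ++ S'). rewrite app_assoc. apply H3.
      rewrite map_app. apply NoDup_snoc; auto. intros Hi. apply in_map_iff in Hi as [y [Hy Hy2]].
      assert (existsb (fun y => Nat.eqb (lidx y) (lidx x)) S = true) by (apply existsb_exists; exists y; split; auto; apply Nat.eqb_eq; auto).
      congruence. Qed.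

Lemma ORDER_bound n X : valid n X -> ORDER X + INR (kk n X) <= INR n.
Proof. intros Hv. replace (INR n) with (INR (length (filter (presb X) (seq 0 n))) + INR (kk n X)) by (rewrite <- plus_INR, pres_count; reflexivity).
  destruct (scan_spec (leaf_list X) []) as [S' [H1 [H2 H3]]]. simpl in H1.
  unfold ORDER, worder. rewrite H1. change (fold_right _ 0 S') with (sumR (fun l => if lpos l then 1 else 0) S').
  rewrite sumR_ind. rewrite Rmult_1_r. apply Rplus_le_compat_r. apply le_INR.
  rewrite <- (length_map lidx). apply NoDup_incl_length.
  - apply NoDup_map_filter. apply H3. constructor.
  - intros y Hy. apply in_map_iff in Hy as [x [<- Hx]]. apply filter_In in Hx as [Hx Hp].
    pose proof (H2 x Hx) as HL. apply filter_In. split.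
    + apply in_seq. pose proof (term_lt n x (Hv x HL)). lia.
    + apply presb_iff. destruct x as [i b]; simpl in *; subst; auto. Qed.

Definition majterm (X : tree) (i : nat) : R :=
  (let cp := count_lit i true (leaf_list X) in
   let cn := count_lit i false (leaf_list X) in
   if Nat.leb 1 cp && Nat.leb cn cp then 1 else 0).

Lemma MAJ_eq n X : MAJORITY n X = sumR (majterm X) (seq 0 n).
Proof. reflexivity. Qed.

Lemma MAJ_bound n X : MAJORITY n X + INR (kk n X) <= INR n.
Proof. replace (INR n) with (INR (length (filter (presb X) (seq 0 n))) + INR (kk n X)) by (rewrite <- plus_INR, pres_count; reflexivity). apply Rplus_le_compat_r. rewrite MAJ_eq.
  replace (INR (length (filter (presb X) (seq 0 n)))) with (INR (length (filter (presb X) (seq 0 n))) * 1) by ring.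
  rewrite <- sumR_ind. apply sumR_le. intros i _. unfold majterm. cbv zeta.
  destruct (Nat.leb 1 (count_lit i true (leaf_list X)) && _) eqn:E; [|destruct presb; lra].
  apply andb_true_iff in E as [E _]. apply Nat.leb_le in E. unfold count_lit in E.
  destruct (filter _ (leaf_list X)) as [|y l] eqn:F; simpl in E; [lia|].
  assert (In y (filter (fun y => Nat.eqb (lidx y) i && Bool.eqb (lpos y) true) (leaf_list X))) by (rewrite F; left; auto).
  apply filter_In in H as [Hy Hp]. destruct y as [j b]; simpl in Hp. apply andb_true_iff in Hp as [Hp1 Hp2].
  apply Nat.eqb_eq in Hp1. destruct b; [|discriminate]. subst j.
  replace (presb X i) with true by (symmetry; apply presb_iff; auto). lra. Qed.

Fixpoint nbuild (x : lit) (r : list lit) : ntree :=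
  match r with [] => Leaf x | y :: r' => J (Leaf x) (nbuild y r') end.
Lemma nbuild_leaves x r : nleaves (nbuild x r) = x :: r.
Proof. revert x; induction r; intros; simpl; auto. rewrite IHr; auto. Qed.
Definition LT (i : nat) : lit := Lit i true.
Definition Yw (n : nat) : tree :=
  match n with O => None | S n' => Some (nbuild (LT 0) (map LT (seq 1 n'))) end.
Lemma Yw_leaves n : leaf_list (Yw n) = map LT (seq 0 n).
Proof. destruct n; simpl; auto. rewrite nbuild_leaves; auto. Qed.
Lemma Yw_valid n : valid n (Yw n).
Proof. intros l Hl. rewrite Yw_leaves in Hl. apply in_map_iff in Hl as [i [<- Hi]].
  unfold terminals. apply in_flat_map. exists i. split; auto. left; auto. Qed.

Lemma scan_LT m : forall a S, (forall y, In y S -> (lidx y < a)%nat) ->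
  order_scan S (map LT (seq a m)) = S ++ map LT (seq a m).
Proof. induction m; intros a S H; simpl. rewrite app_nil_r; auto.
  destruct (existsb (fun y => Nat.eqb (lidx y) a) S) eqn:E.
  - apply existsb_exists in E as [y [Hy E]]. apply Nat.eqb_eq in E. specialize (H y Hy). lia.
  - rewrite IHm. rewrite <- app_assoc; auto. intros y Hy. apply in_app_or in Hy as [Hy|[<-|[]]].
    specialize (H y Hy); lia. simpl; lia. Qed.

Lemma ORDER_Yw n : INR n <= ORDER (Yw n).
Proof. unfold ORDER, worder. rewrite Yw_leaves, scan_LT by (intros _ []). simpl app.
  change (fold_right _ 0 (map LT (seq 0 n))) with (sumR (fun l => if lpos l then 1 else 0) (map LT (seq 0 n))).
  rewrite sumR_map. rewrite (sumR_ext _ (fun _ => 1)) by (intros; reflexivity). rewrite sumR_const, length_seq. lra. Qed.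

Lemma MAJ_Yw n : INR n <= MAJORITY n (Yw n).
Proof. rewrite MAJ_eq. rewrite (sumR_ext _ (fun _ => 1)). rewrite sumR_const, length_seq. lra.
  intros i Hi. unfold majterm. cbv zeta. rewrite Yw_leaves.
  assert (C0 : forall l, (forall y, In y l -> lpos y = true) -> count_lit i false l = 0%nat).
  { induction l; intros H; simpl; auto. unfold count_lit; simpl. rewrite (H a (or_introl eq_refl)). simpl.
    rewrite andb_false_r. apply IHl. intros; apply H; right; auto. }
  rewrite C0. 2:{ intros y Hy. apply in_map_iff in Hy as [j [<- _]]. reflexivity. }
  assert (1 <= count_lit i true (map LT (seq 0 n)))%nat.
  { unfold count_lit. destruct (filter _ _) eqn:F; simpl; [|lia].
    assert (In (LT i) (filter (fun y => Nat.eqb (lidx y) i && Bool.eqb (lpos y) true) (map LT (seq 0 n)))).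
    { apply filter_In. split. apply in_map; auto. simpl. rewrite Nat.eqb_refl. reflexivity. }
    rewrite F in H; destruct H. }
  apply Nat.leb_le in H. rewrite H. reflexivity. Qed.

Lemma ln_Hh k : ln (INR (S k)) <= Hh k.
Proof. induction k. simpl. rewrite ln_1. lra.
  cbn [Hh]. assert (P : 0 < INR (S k)) by (rewrite S_INR; pose proof (pos_INR k); lra).
  replace (INR (S (S k))) with (INR (S k) * (1 + / INR (S k))) by (rewrite (S_INR (S k)); field; lra).
  rewrite ln_mult by (try lra; pose proof (Rinv_0_lt_compat _ P); lra).
  assert (ln (1 + / INR (S k)) < / INR (S k)).
  { pose proof (Rinv_0_lt_compat _ P). rewrite <- (ln_exp (/ INR (S k))) at 2. apply ln_increasing; [lra|].
    apply exp_ineq1. lra. }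
  lra. Qed.

Lemma gg_None_big n : (1 <= n)%nat -> 1 * INR n * ln (INR n) <= gg n None.
Proof. intros Hn. unfold gg. rewrite kk_None. assert (P : 1 <= INR n) by (apply (le_INR 1); auto).
  assert (ln (INR n) <= Hh n).
  { eapply Rle_trans; [|apply ln_Hh]. rewrite S_INR. left. apply ln_increasing; lra. }
  pose proof (Hh_nonneg n). nra. Qed.

Theorem theorem1 :
  (exists c, 0 < c /\ exists n0 : nat, forall n : nat, (1 <= n)%nat -> (n0 <= n)%nat ->
     expected_time_ge n ORDER None (c * INR n * ln (INR n))) /\
  (exists c, 0 < c /\ exists n0 : nat, forall n : nat, (1 <= n)%nat -> (n0 <= n)%nat ->
     expected_time_ge n (MAJORITY n) None (c * INR n * ln (INR n))).
Proof. split; exists 1; split; try lra; exists 0%nat; intros n Hn _.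
  - apply exp_time; auto. apply opt_kk. exists (Yw n); split; [apply Yw_valid|apply ORDER_Yw].
    apply ORDER_bound. apply gg_None_big; auto.
  - apply exp_time; auto. apply opt_kk. exists (Yw n); split; [apply Yw_valid|apply MAJ_Yw].
    intros X _; apply MAJ_bound. apply gg_None_big; auto. Qed.
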